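(* Suppose $f(x)=x^m\pm1$, and let $G=(g_{ij})$ be a $k\times l$ matrix over $A$ whose rows $g^{(1)},\ldots,g^{(k)}$ form a basis of divisors of an $A$-code $C$. For each $i$ let $d_i=\deg L_{\mathrm{coef}}(g^{(i)})$ and let $\alpha_i$ be the constant coefficient of $L_{\mathrm{coef}}(g^{(i)})$. Let $G'$ be the $k\times l$ matrix with entries $\alpha_i^{-1}x^{d_i}g_{ij}(x^{-1})$ (computed in $A$, where $x$ is invertible). Then the rows of $G'$ form a basis of divisors of the $A$-code $(C^\perp)^{\perp_{\mathbb{F}}}$.
   Context: Let $\mathbb{F}$ be a finite field, $f(x)\in\mathbb{F}[x]$ monic of degree $m$, $A=\mathbb{F}[x]/\langle f(x)\rangle$, elements identified with polynomials of degree $<m$. An $A$-code of length $l$ is an $A$-submodule of $A^l$; $C^\perp=\{a\in A^l:\sum_ia_ic_i=0\ \forall c\in C\}$. Identify $\sum_{i=0}^{m-1}a_ix^i\in A$ with $(a_0,\ldots,a_{m-1})\in\mathbb{F}^m$ and $A^l$ with $\mathbb{F}^{lm}$ by concatenation; $D^{\perp_{\mathbb{F}}}$ is the dual of $D$ with respect to the standard dot product on $\mathbb{F}^{lm}$, viewed in $A^l$. For $u\in A^l$, $L_{\mathrm{ind}}(u)$ is the smallest index of a nonzero entry ($\infty$ if $u=0$) and $L_{\mathrm{coef}}(u)$ that entry. For nonzero $C$, $L_{\mathrm{ind}}(C)=\min_{u\in C}L_{\mathrm{ind}}(u)$; $L_{\mathrm{coef}}(C)$ is the monic polynomial $g$ of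 minimum degree such that some $c\in C$ has $L_{\mathrm{ind}}(c)=L_{\mathrm{ind}}(C)$ and $L_{\mathrm{coef}}(c)=g$ (such $c$ is a leading element). $C^{(1)}=C$, $C^{(n+1)}=\{c\in C^{(n)}:L_{\mathrm{ind}}(c)>L_{\mathrm{ind}}(C^{(n)})\}$ while $C^{(n)}\ne0$; with $k$ largest such that $C^{(k)}\neq0$, a tuple $(g^{(1)},\ldots,g^{(k)})$ with $g^{(j)}$ a leading element of $C^{(j)}$ is a basis of divisors of $C$. *)

(* Defs.v *)
From HB Require Import structures.
From mathcomp Require Import all_boot all_order all_algebra.
Set Implicit Arguments. Unset Strict Implicit. Unset Printing Implicit Defensive.
Import Order.TTheory GRing.Theory Num.Theory.
Local Open Scope ring_scope.

(* An element of A = F[x]/<f> is its coefficient vector (a_0,...,a_{m-1})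
   : 'rV[F]_m.  An element of A^l is an l x m matrix over F whose i-th row is
   the i-th entry (so A^l = F^{lm} by concatenation of the rows).
   Indices of entries are 0-based: index i : 'I_l; "infinity" is encoded by l. *)

Section Defs.
Variables (F : finFieldType) (m l : nat) (eps : F).

Definition fpoly : {poly F} := 'X^m + eps%:P.

Definition toP (a : 'rV[F]_m) : {poly F} := rVpoly a.
Definition ofP (p : {poly F}) : 'rV[F]_m := poly_rV (p %% fpoly).

Definition mulA (a b : 'rV[F]_m) : 'rV[F]_m := ofP (toP a * toP b).

Definition scaleA (a : 'rV[F]_m) (u : 'M[F]_(l, m)) : 'M[F]_(l, m) :=
  \matrix_(i < l) mulA a (row i u).

Definition is_Acode (C : {set 'M[F]_(l, m)}) : Prop :=
  [/\ 0 \in C,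
      (forall u v, u \in C -> v \in C -> u + v \in C) &
      (forall a u, u \in C -> scaleA a u \in C)].

Definition formA (a c : 'M[F]_(l, m)) : 'rV[F]_m :=
  \sum_(i < l) mulA (row i a) (row i c).
Definition dualA (C : {set 'M[F]_(l, m)}) : {set 'M[F]_(l, m)} :=
  [set a | [forall c in C, formA a c == 0]].

Definition dotF (u v : 'M[F]_(l, m)) : F := \sum_(i < l) \sum_(j < m) u i j * v i j.
Definition dualF (D : {set 'M[F]_(l, m)}) : {set 'M[F]_(l, m)} :=
  [set v | [forall u in D, dotF u v == 0]].

(* L_ind(u): smallest index of a nonzero entry, l (= infinity) if u = 0 *)
Definition Lind (u : 'M[F]_(l, m)) : nat :=
  find (fun i : 'I_l => row i u != 0) (enum 'I_l).
Definition Lcoef (u : 'M[F]_(l, m)) : {poly F} :=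
  toP (nth 0 [seq row i u | i <- enum 'I_l] (Lind u)).

Definition LindS (C : {set 'M[F]_(l, m)}) : nat := \big[minn/l]_(c in C) Lind c.

Definition nonzero_set (C : {set 'M[F]_(l, m)}) : bool := [exists c in C, c != 0].

Definition is_leading (C : {set 'M[F]_(l, m)}) (c : 'M[F]_(l, m)) : Prop :=
  [/\ c \in C, Lind c = LindS C, Lcoef c \is monic &
      forall c', c' \in C -> Lind c' = LindS C -> Lcoef c' \is monic ->
        (size (Lcoef c) <= size (Lcoef c'))%N].

(* Csub C n = C^{(n+1)} of the paper (0-based) *)
Fixpoint Csub (C : {set 'M[F]_(l, m)}) (n : nat) : {set 'M[F]_(l, m)} :=
  if n is n'.+1 then [set c in Csub C n' | (LindS (Csub C n') < Lind c)%N]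
  else C.

(* (G 0, ..., G (k-1)) is a basis of divisors of C (G j = g^{(j+1)}) *)
Definition basis_of_divisors (C : {set 'M[F]_(l, m)}) (k : nat)
  (G : 'I_k -> 'M[F]_(l, m)) : Prop :=
  [/\ (forall n, (n < k)%N -> nonzero_set (Csub C n)),
      (forall n, (k <= n)%N -> ~~ nonzero_set (Csub C n)) &
      forall j : 'I_k, is_leading (Csub C j) (G j)].

(* x^{-1} in A:  x^m = -eps, so x^{-1} = -eps x^{m-1} (eps^2 = 1) *)
Definition xinvP : {poly F} := (- eps) *: 'X^(m.-1).

(* the transformed matrix G': entry (i,j) = alpha_i^{-1} x^{d_i} g_ij(x^{-1}) in A,
   d_i = deg L_coef(g^(i)), alpha_i = constant coefficient of L_coef(g^(i)).
   g(x^{-1}) is computed as the composition g \Po xinvP reduced mod f. *)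
Definition reciprocal_basis (k : nat) (G : 'I_k -> 'M[F]_(l, m)) : 'I_k -> 'M[F]_(l, m) :=
  fun i => \matrix_(j < l)
    let g := Lcoef (G i) in
    ofP (((g`_0)^-1) *: ('X^((size g).-1) * (toP (row j (G i)) \Po xinvP))).

End Defs.

(* Main.v *)
Require Import Defs.
From HB Require Import structures.
From mathcomp Require Import all_boot all_order all_algebra.
From mathcomp Require Import zify.
Set Implicit Arguments. Unset Strict Implicit. Unset Printing Implicit Defensive.
Import GRing.Theory.
Local Open Scope ring_scope.

Section LA.
Variables (F : finFieldType) (m l : nat).
Local Notation M := 'M[F]_(l, m).
Implicit Types (u v w : M) (S : {set M}).

Lemma dotF_vec u v : dotF u v = (mxvec u *m (mxvec v)^T) 0 0.
Proof.
rewrite mxE (reindex _ (curry_mxvec_bij _ _)) /=.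
rewrite /dotF pair_big /=.
by apply: eq_bigr => [[i j]] _; rewrite /= mxE !mxvecE.
Qed.

Lemma dualF2 S : 0 \in S -> (forall u v, u \in S -> v \in S -> u + v \in S) ->
  (forall (x : F) u, u \in S -> x *: u \in S) -> dualF (dualF S) = S.
Proof.
move=> S0 SD SZ.
set s := enum S; set n := size s.
pose B : 'M[F]_(n, l * m) := \matrix_(i < n) mxvec (nth 0 s i).
have memB u : u \in S -> exists i, mxvec u = row i B.
  move=> uS; have ui : (index u s < n)%N by rewrite index_mem mem_enum.
  by exists (Ordinal ui); rewrite rowK nth_index // mem_enum.
have Bmem (x : 'rV[F]_(l * m)) : (x <= B)%MS -> vec_mx x \in S.
  case/submxP => D ->; rewrite mulmx_sum_row linear_sum /=.
  apply: (big_ind (fun x => x \in S)) => //= i _.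
  rewrite linearZ /= rowK mxvecK; apply: SZ.
  by rewrite -mem_enum mem_nth.
pose K := kermx B^T.
have BK : B *m K^T = 0 by rewrite -[B]trmxK -trmx_mul mulmx_ker trmx0.
apply/setP => w; apply/idP/idP; last first.
  move=> wS; rewrite inE; apply/forallP => v; apply/implyP; rewrite inE.
  move/forallP/(_ w)/implyP/(_ wS)/eqP => h.
  by apply/eqP; rewrite /dotF exchange_big /=; rewrite /dotF exchange_big /= in h;
    rewrite -[RHS]h; apply: eq_bigr => j _; apply: eq_bigr => i _; rewrite mulrC.
rewrite inE => /forallP hw.
have rK r : vec_mx (row r K) \in dualF S.
  rewrite inE; apply/forallP => u; apply/implyP => /memB [i ui].
  rewrite dotF_vec ui vec_mxK.
  apply/eqP; have h := congr1 (fun X : 'M[F]_(n, l * m) => X i r) BK.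
  rewrite !mxE in h; rewrite mxE -[RHS]h; apply: eq_bigr => k _; rewrite !mxE.
  by [].
have wK : (mxvec w <= kermx K^T)%MS.
  rewrite sub_kermx; apply/eqP/rowP => r; rewrite !mxE.
  have := hw (vec_mx (row r K)); rewrite rK /= dotF_vec vec_mxK => /eqP h.
  rewrite -[RHS]h mxE; apply: eq_bigr => k _; rewrite !mxE.
  by rewrite mulrC.
have sB : (B <= kermx K^T)%MS by rewrite sub_kermx BK.
have rk : \rank (kermx K^T) = \rank B.
  rewrite mxrank_ker mxrank_tr /K mxrank_ker mxrank_tr subKn //.
  exact: rank_leq_col.
have := mxrank_leqif_eq sB; rewrite rk => /leqif_refl /andP [_ KB].
by rewrite -[w]mxvecK; apply: Bmem; apply: submx_trans KB.
Qed.

End LA.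

Section Alg.
Variables (F : finFieldType) (m l : nat) (eps : F).
Hypothesis Hm : (0 < m)%N.
Hypothesis Heps2 : eps * eps = 1.
Implicit Types p q : {poly F}.
Implicit Types a b r : 'rV[F]_m.

Local Notation f := (fpoly m eps).
Local Notation xq := (xinvP m eps).
Local Notation toP := (@toP F m).
Local Notation ofP := (ofP m eps).
Local Notation mulA := (@Defs.mulA F m eps).

Lemma size_f : size f = m.+1.
Proof. by rewrite /fpoly size_XnaddC. Qed.

Lemma monic_f : f \is monic.
Proof. exact: monicXnaddC. Qed.

Lemma modf_small p : (size p <= m)%N -> p %% f = p.
Proof. by move=> h; rewrite modp_small // size_f ltnS. Qed.

Lemma size_modf p : (size (p %% f)%R <= m)%N.
Proof. by have := ltn_modpN0 p (monic_neq0 monic_f); rewrite size_f ltnS. Qed.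

Lemma toP_size a : (size (toP a) <= m)%N.
Proof. exact: size_poly. Qed.

Lemma toP_ofP p : toP (ofP p) = p %% f.
Proof. by rewrite /toP /ofP poly_rV_K // size_modf. Qed.

Lemma ofP_toP a : ofP (toP a) = a.
Proof. by rewrite /ofP modf_small ?toP_size // /toP rVpolyK. Qed.

Lemma toP_inj : injective toP.
Proof. exact: (can_inj (@rVpolyK _ _)). Qed.

Lemma ofP_mod p : ofP (p %% f) = ofP p.
Proof. by rewrite /ofP modp_id. Qed.

Lemma ofPD p q : ofP (p + q) = ofP p + ofP q.
Proof. by rewrite /ofP modpD linearD. Qed.

Lemma ofPZ (x : F) p : ofP (x *: p) = x *: ofP p.
Proof. by rewrite /ofP modpZl linearZ. Qed.

Lemma ofP0 : ofP 0 = 0.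
Proof. by rewrite /ofP mod0p linear0. Qed.

Lemma toPD a b : toP (a + b) = toP a + toP b.
Proof. exact: linearD. Qed.

Lemma toPZ (x : F) a : toP (x *: a) = x *: toP a.
Proof. exact: linearZ. Qed.

Lemma toP0 : toP 0 = 0.
Proof. exact: linear0. Qed.

Lemma modp_mulml p q : ((p %% f) * q) %% f = (p * q) %% f.
Proof. by rewrite mulrC modp_mul mulrC. Qed.

Lemma modp_sumf (I : Type) (r : seq I) (P : pred I) (E : I -> {poly F}) :
  (\sum_(i <- r | P i) E i) %% f = \sum_(i <- r | P i) (E i %% f).
Proof. exact: (big_morph (fun p => p %% f) (fun p q => modpD f p q) (mod0p f)). Qed.

Lemma mA_toP a b : toP (mulA a b) = (toP a * toP b) %% f.
Proof. by rewrite /Defs.mulA toP_ofP. Qed.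

Lemma mA_C a b : mulA a b = mulA b a.
Proof. by rewrite /Defs.mulA mulrC. Qed.

Lemma mA_A a b (c : 'rV[F]_m) : mulA a (mulA b c) = mulA (mulA a b) c.
Proof.
by rewrite /Defs.mulA !toP_ofP -[LHS]ofP_mod -[RHS]ofP_mod modp_mul modp_mulml mulrA.
Qed.

Lemma mA_Dl a b (c : 'rV[F]_m) : mulA (a + b) c = mulA a c + mulA b c.
Proof. by rewrite /Defs.mulA toPD mulrDl ofPD. Qed.

Lemma mA_0l (c : 'rV[F]_m) : mulA 0 c = 0.
Proof. by rewrite /Defs.mulA toP0 mul0r ofP0. Qed.

Lemma mA_0r (c : 'rV[F]_m) : mulA c 0 = 0.
Proof. by rewrite mA_C mA_0l. Qed.

Lemma mA_Zl x a (c : 'rV[F]_m) : mulA (x *: a) c = x *: mulA a c.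
Proof. by rewrite /Defs.mulA toPZ -scalerAl ofPZ. Qed.

Lemma mA_suml (I : Type) (r : seq I) (P : pred I) (E : I -> 'rV[F]_m) (c : 'rV[F]_m) :
  mulA (\sum_(i <- r | P i) E i) (c : 'rV[F]_m) = \sum_(i <- r | P i) mulA (E i) c.
Proof. exact: (big_morph (fun a => mulA a (c : 'rV[F]_m)) (fun a b => mA_Dl a b c) (mA_0l c)). Qed.

Lemma mA_C1 x r : mulA (ofP x%:P) r = x *: r.
Proof.
rewrite /Defs.mulA toP_ofP modf_small; last by rewrite (leq_trans (size_polyC_leq1 _)).
by rewrite mul_polyC ofPZ ofP_toP.
Qed.


Lemma mod1f : 1 %% f = 1.
Proof. by rewrite modf_small // size_poly1. Qed.

Lemma modCf x : x%:P %% f = x%:P.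
Proof. by rewrite modf_small // (leq_trans (size_polyC_leq1 _)). Qed.

Lemma Xm_red : ((-eps) *: 'X^m) %% f = 1.
Proof.
rewrite -(modp_addl_mul_small (d := f) (- eps)%:P (r := 1)); last by rewrite size_poly1 size_f.
congr (_ %% f); rewrite /fpoly mulrDr mul_polyC -polyCM mulNr Heps2 polyCN.
by rewrite -addrA addNr addr0.
Qed.

Lemma inv_uniq (a u v : {poly F}) : (a * u) %% f = 1 -> (a * v) %% f = 1 -> u %% f = v %% f.
Proof.
move=> hu hv.
rewrite -[u]mulr1 -hv modp_mul mulrA [u * a]mulrC [_ * v]mulrC -modp_mul hu.
by rewrite mulr1.
Qed.

Lemma Xxq : ('X * xq) %% f = 1.
Proof.
rewrite /xinvP -scalerAr -exprS prednK //.
exact: Xm_red.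
Qed.

Lemma modpX p n : ((p %% f) ^+ n) %% f = (p ^+ n) %% f.
Proof. rewrite !(@Pdiv.IdomainMonic.modpE _ f monic_f); exact: Pdiv.RingMonic.rmodpX monic_f _ _. Qed.

Lemma Xk_xqk k : ('X^k * xq ^+ k) %% f = 1.
Proof. by rewrite -exprMn -modpX Xxq expr1n mod1f. Qed.

Lemma xq_pow k : (0 < k <= m)%N -> (xq ^+ k) %% f = (-eps) *: 'X^(m - k).
Proof.
case/andP=> k0 km.
rewrite -[RHS]modf_small; last first.
  by rewrite (leq_trans (size_scale_leq _ _)) // size_polyXn ltn_subrL k0 (leq_trans _ km).
apply: (@inv_uniq 'X^k); first exact: Xk_xqk.
by rewrite -scalerAr -exprD subnKC // Xm_red.
Qed.

Lemma xq_m : (xq ^+ m) %% f = (-eps)%:P.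
Proof. by rewrite xq_pow ?Hm ?leqnn // subnn expr0 -mul_polyC mulr1. Qed.

Lemma f_comp : (f \Po xq) %% f = 0.
Proof.
rewrite /fpoly comp_polyD comp_polyC rmorphXn /= comp_polyX modpD xq_m modCf.
by rewrite polyCN addNr.
Qed.

Lemma comp_mod p : ((p %% f) \Po xq) %% f = (p \Po xq) %% f.
Proof.
rewrite [in RHS](divp_eq p f) comp_polyD comp_polyM modpD -modp_mul f_comp mulr0 mod0p.
by rewrite add0r.
Qed.

Lemma compr_mod p q : (p \Po (q %% f)) %% f = (p \Po q) %% f.
Proof. rewrite !(@Pdiv.IdomainMonic.modpE _ f monic_f); exact: Pdiv.RingMonic.rmodp_compr monic_f _ _. Qed.

Lemma xq_xq : (xq \Po xq) %% f = 'X %% f.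
Proof.
apply: (@inv_uniq xq).
  rewrite {1}/xinvP comp_polyZ rmorphXn /= comp_polyX -scalerAr -exprS prednK //.
  by rewrite modpZl xq_m -mul_polyC -polyCM mulNr mulrN Heps2 opprK.
by rewrite mulrC Xxq.
Qed.

Definition sig a : 'rV[F]_m := ofP (toP a \Po xq).

Lemma toP_sig a : toP (sig a) = (toP a \Po xq) %% f.
Proof. exact: toP_ofP. Qed.

Lemma sig_mul a b : sig (mulA a b) = mulA (sig a) (sig b).
Proof.
apply: toP_inj; rewrite toP_sig !mA_toP !toP_sig comp_mod comp_polyM.
by rewrite modp_mul modp_mulml.
Qed.

Lemma sigK a : sig (sig a) = a.
Proof.
apply: toP_inj; rewrite !toP_sig comp_mod -comp_polyA -compr_mod xq_xq compr_mod.
by rewrite comp_polyXr modf_small // toP_size.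
Qed.

Lemma sig_inj : injective sig.
Proof. exact: (can_inj sigK). Qed.

Lemma sigD a b : sig (a + b) = sig a + sig b.
Proof. by rewrite /sig toPD comp_polyD ofPD. Qed.

Lemma sigZ (x : F) a : sig (x *: a) = x *: sig a.
Proof. by rewrite /sig toPZ comp_polyZ ofPZ. Qed.

Lemma sig0 : sig 0 = 0.
Proof. by rewrite /sig toP0 comp_poly0 ofP0. Qed.

Lemma sig_eq0 a : (sig a == 0) = (a == 0).
Proof. by rewrite -{1}sig0 (inj_eq sig_inj). Qed.


Lemma toP_sumX a : toP a = \sum_(j < m) a 0 j *: 'X^j.
Proof.
rewrite {1}(row_sum_delta a) /Defs.toP linear_sum; apply: eq_bigr => j _.
by rewrite linearZ /= rVpoly_delta.
Qed.

Lemma comp_sum (I : Type) (r : seq I) (P : pred I) (E : I -> {poly F}) q :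
  (\sum_(i <- r | P i) E i) \Po q = \sum_(i <- r | P i) (E i \Po q).
Proof. exact: (big_morph (fun p => p \Po q) (fun p p' => comp_polyD p p' q) (comp_poly0 q)). Qed.

Lemma Xpow_red n : (n < m)%N -> ('X^(m + n)) %% f = (-eps) *: 'X^n.
Proof.
move=> nm.
rewrite -(modp_addl_mul_small (d := f) ('X^n) (r := (-eps) *: 'X^n)); last first.
  by rewrite size_f ltnS (leq_trans (size_scale_leq _ _)) // size_polyXn.
congr (_ %% f); rewrite /fpoly mulrDr -exprD addnC [_ * eps%:P]mulrC mul_polyC.
by rewrite scaleNr addrK.
Qed.

Lemma basis_eq (j k : nat) : (j < m)%N -> (k < m)%N ->
  (('X^j * 'X^k) %% f)`_0 = ((xq ^+ k) %% f)`_j.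
Proof.
move=> jm km; case: k km => [|k] km.
  rewrite expr0 mulr1 mod1f modf_small ?size_polyXn // coefXn coef1.
  by rewrite eq_sym.
rewrite xq_pow; last by lia.
rewrite coefZ coefXn -exprD.
case: (ltnP (j + k.+1) m) => h.
  rewrite modf_small ?size_polyXn // coefXn.
  have -> : (0 == j + k.+1)%N = false by lia.
  have -> : (j == m - k.+1)%N = false by lia.
  by rewrite mulr0.
have -> : (j + k.+1 = m + (j + k.+1 - m))%N by lia.
rewrite Xpow_red; last by lia.
rewrite coefZ coefXn.
by have -> : (0 == j + k.+1 - m)%N = (j == m - k.+1)%N by lia.
Qed.

Lemma const_mulA a b : (toP (mulA a b))`_0 = \sum_(j < m) a 0 j * sig b 0 j.
Proof.
rewrite mA_toP (toP_sumX a) (toP_sumX b) mulr_suml modp_sumf coef_sum.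
apply: eq_bigr => j _.
have -> : sig b 0 j = (toP (sig b))`_j by rewrite /Defs.toP coef_rVpoly_ord.
rewrite toP_sig (toP_sumX b) comp_sum modp_sumf coef_sum.
rewrite mulr_sumr modp_sumf coef_sum mulr_sumr; apply: eq_bigr => k _.
rewrite comp_polyZ rmorphXn /= comp_polyX modpZl coefZ.
rewrite -scalerAl -scalerAr scalerA modpZl coefZ basis_eq //.
by rewrite mulrA [a 0 j * _]mulrC.
Qed.


Local Notation M := 'M[F]_(l, m).
Local Notation scaleA := (@scaleA F m l eps).
Local Notation formA := (@formA F m l eps).
Implicit Types (u v w c : M) (t : 'rV[F]_m).

Definition star (c : M) : M := \matrix_(i < l) sig (row i c).

Lemma row_star i (c : M) : row i (star c) = sig (row i c).
Proof. exact: rowK. Qed.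

Lemma row_scaleA i t c : row i (scaleA t c) = mulA t (row i c).
Proof. exact: rowK. Qed.

Lemma rowDm i u v : row i (u + v) = row i u + row i v.
Proof. by apply/rowP => j; rewrite !mxE. Qed.

Lemma rowZm i (x : F) u : row i (x *: u) = x *: row i u.
Proof. by apply/rowP => j; rewrite !mxE. Qed.

Lemma starK c : star (star c) = c.
Proof. by apply/row_matrixP => i; rewrite !row_star sigK. Qed.

Lemma star_inj : injective star.
Proof. exact: (can_inj starK). Qed.

Lemma starD u v : star (u + v) = star u + star v.
Proof. by apply/row_matrixP => i; rewrite rowDm !row_star rowDm sigD. Qed.

Lemma starZ (x : F) u : star (x *: u) = x *: star u.
Proof. by apply/row_matrixP => i; rewrite rowZm !row_star rowZm sigZ. Qed.

Lemma star_scaleA t c : star (scaleA t c) = scaleA (sig t) (star c).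
Proof. by apply/row_matrixP => i; rewrite row_scaleA !row_star row_scaleA sig_mul. Qed.

Lemma scaleA_C (x : F) c : scaleA (ofP x%:P) c = x *: c.
Proof. by apply/row_matrixP => i; rewrite row_scaleA rowZm mA_C1. Qed.

Lemma formA_scale (a : M) t c : formA a (scaleA t c) = mulA (formA a c) t.
Proof.
rewrite /Defs.formA mA_suml; apply: eq_bigr => i _.
rewrite row_scaleA -mA_A.
by rewrite [mulA (row i c) t]mA_C.
Qed.

Lemma CI (a : M) c : dotF (star c) a = (toP (formA a c))`_0.
Proof.
rewrite /Defs.formA /Defs.toP linear_sum coef_sum /dotF; apply: eq_bigr => i _.
rewrite -/(Defs.toP _) const_mulA //; apply: eq_bigr => j _.
by rewrite /star !mxE mulrC.
Qed.

Lemma coef_extract (y : 'rV[F]_m) (j : 'I_m) :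
  (toP y)`_j = (toP (mulA y (sig (delta_mx 0 j))))`_0.
Proof.
rewrite const_mulA // sigK /Defs.toP coef_rVpoly_ord.
rewrite (bigD1 j) //= big1 ?addr0 => [|i /negbTE ij]; rewrite mxE ?eqxx ?ij /=.
  by rewrite mulr1.
by rewrite mulr0.
Qed.

Lemma dualA_eq (C : {set M}) : (forall t c, c \in C -> scaleA t c \in C) ->
  dualA eps C = dualF [set v | star v \in C].
Proof.
move=> HC; apply/setP => a; rewrite !inE; apply/forallP/forallP.
  move=> h v; apply/implyP; rewrite inE => vC.
  have := h (star v); rewrite vC /= => /eqP h0.
  by rewrite -{1}(starK v) CI h0 /Defs.toP linear0 coef0.
move=> h c; apply/implyP => cC; apply/eqP; apply: toP_inj.
apply/polyP => j; rewrite /Defs.toP linear0 coef0 -/(Defs.toP _).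
case: (ltnP j m) => jm; last first.
  by rewrite nth_default // (leq_trans (toP_size _) jm).
have -> : j = Ordinal jm by [].
rewrite coef_extract // -formA_scale // -CI.
have := h (star (scaleA (sig (delta_mx 0 (Ordinal jm))) c)).
by rewrite inE starK HC //= => /eqP.
Qed.

Lemma dual_dual (C : {set M}) : is_Acode eps C ->
  dualF (dualA eps C) = [set v | star v \in C].
Proof.
case=> C0 CD CZ; rewrite dualA_eq //; apply: dualF2.
- by rewrite inE -(scale0r (0 : M)) starZ scale0r.
- by move=> u v; rewrite !inE starD; apply: CD.
- by move=> x u; rewrite !inE starZ -scaleA_C; apply: CZ.
Qed.



Lemma Lind_le u : (Lind u <= l)%N.
Proof. by rewrite /Lind (leq_trans (find_size _ _)) // size_enum_ord. Qed.

Lemma Lind_zero u (i : 'I_l) : (i < Lind u)%N -> row i u = 0.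
Proof.
move=> h; have := before_find i h; rewrite nth_ord_enum.
by move/negbT; rewrite negbK => /eqP.
Qed.

Lemma Lind_row u (i : 'I_l) : Lind u = i -> row i u != 0.
Proof.
move=> h.
have hs : has (fun i : 'I_l => row i u != 0) (enum 'I_l).
  by rewrite has_find -/(Lind u) h size_enum_ord ltn_ord.
by have := nth_find i hs; rewrite -/(Lind u) h nth_ord_enum.
Qed.

Lemma Lind_char u (i : 'I_l) : (forall i' : 'I_l, (i' < i)%N -> row i' u = 0) ->
  row i u != 0 -> Lind u = i.
Proof.
move=> h0 h1; case: (ltngtP (Lind u) i) => // h.
- have hl : (Lind u < l)%N by apply: ltn_trans h _.
  have := Lind_row (i := Ordinal hl) erefl.
  by rewrite h0 ?eqxx.
- by move: h1; rewrite Lind_zero ?eqxx.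
Qed.

Lemma Lcoef_row u (i : 'I_l) : Lind u = i -> Lcoef u = toP (row i u).
Proof.
move=> h; rewrite /Lcoef h (nth_map i) ?size_enum_ord ?ltn_ord //.
by rewrite nth_ord_enum.
Qed.

Lemma Lcoef_l u : (l <= Lind u)%N -> Lcoef u = 0.
Proof.
move=> h; rewrite /Lcoef nth_default ?size_map ?size_enum_ord //.
- by rewrite /Defs.toP linear0.
- by rewrite -enumT size_enum_ord.
Qed.

Lemma Lind_mono u v : (forall i, row i u = 0 -> row i v = 0) -> (Lind u <= Lind v)%N.
Proof.
move=> h; case: (ltnP (Lind v) l) => hv; last exact: leq_trans (Lind_le u) hv.
rewrite leqNgt; apply/negP => lt.
have := Lind_row (i := Ordinal hv) erefl.
by rewrite h ?eqxx // (Lind_zero (i := Ordinal hv)).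
Qed.

Lemma Lind_star c : Lind (star c) = Lind c.
Proof.
apply/eqP; rewrite eqn_leq !Lind_mono // => i; rewrite row_star.
  by move=> ->; rewrite sig0.
by move=> h; apply: sig_inj; rewrite h sig0.
Qed.

Lemma bigmin_le (T : finType) (P : pred T) (E : T -> nat) (x : T) :
  P x -> (\big[minn/l]_(i | P i) E i <= E x)%N.
Proof.
rewrite unlock /reducebig => Px.
have : x \in index_enum T by rewrite mem_index_enum.
elim: (index_enum T) => // y s IH; rewrite inE /=.
case/orP => [/eqP <- | xs]; first by rewrite Px geq_minl.
by case: (P y); [exact: leq_trans (geq_minr _ _) (IH xs) | exact: IH].
Qed.

Lemma bigmin_ex (T : finType) (P : pred T) (E : T -> nat) :
  \big[minn/l]_(i | P i) E i = l \/ exists2 x, P x & \big[minn/l]_(i | P i) E i = E x.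
Proof.
apply: (big_ind (fun y => y = l \/ exists2 x, P x & y = E x)); first by left.
  by move=> y z hy hz; case: (leqP y z) => h.
by move=> i Pi; right; exists i.
Qed.

Lemma LindS_le (S : {set M}) c : c \in S -> (LindS S <= Lind c)%N.
Proof. exact: bigmin_le. Qed.

Lemma LindS_le_l (S : {set M}) : (LindS S <= l)%N.
Proof. by rewrite /LindS; case: (bigmin_ex (fun c : M => c \in S) (@Lind F m l)) => [-> // | [x _ ->]]; apply: Lind_le. Qed.

Lemma LindS_star (X : {set M}) : LindS [set v | star v \in X] = LindS X.
Proof.
apply/eqP; rewrite eqn_leq; apply/andP; split.
  case: (bigmin_ex (fun c : M => c \in X) (@Lind F m l)) => [h | [x xX h]]; rewrite -/(LindS X) in h.
    by rewrite h LindS_le_l.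
  by rewrite h -(starK x) Lind_star LindS_le // inE starK.
case: (bigmin_ex (fun c : M => c \in [set v | star v \in X]) (@Lind F m l)) => [h | [x xX h]];
  rewrite -/(LindS _) in h.
  by rewrite h LindS_le_l.
by rewrite h -Lind_star; apply: LindS_le; move: xX; rewrite /= inE.
Qed.


Lemma Csub_scale (C : {set M}) : (forall t c, c \in C -> scaleA t c \in C) ->
  forall n t c, c \in Csub C n -> scaleA t c \in Csub C n.
Proof.
move=> HC; elim=> [|n IH] t c /=; first exact: HC.
rewrite !inE => /andP [cC lt]; rewrite IH //=; apply: leq_trans lt _.
by apply: Lind_mono => i; rewrite row_scaleA => ->; rewrite mA_0r.
Qed.

Lemma Csub_star (C : {set M}) n :
  Csub [set v | star v \in C] n = [set v | star v \in Csub C n].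
Proof.
elim: n => [|n IH] //=; rewrite IH LindS_star; apply/setP => v.
by rewrite !inE Lind_star.
Qed.

Definition rv (p : {poly F}) : {poly F} := \poly_(i < size p) p`_((size p).-1 - i).

Lemma rev_mod p : (size p <= m)%N -> ('X^((size p).-1) * (p \Po xq)) %% f = rv p.
Proof.
move=> hp; rewrite /rv -[RHS]modf_small ?(leq_trans (size_poly _ _)) //.
rewrite comp_polyE mulr_sumr modp_sumf poly_def modp_sumf.
rewrite [RHS](reindex_inj rev_ord_inj) /=; apply: eq_bigr => i _.
have hi := ltn_ord i; move: (nat_of_ord i) hi => k hk.
set n := size p in hk *.
have -> : ((size p).-1 - (size p - k.+1) = k)%N by lia.
have -> : (size p - k.+1 = (size p).-1 - k)%N by lia.
rewrite -scalerAr !modpZl; congr (_ *: _).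
have -> : 'X^((size p).-1) = 'X^((size p).-1 - k) * 'X^k :> {poly F}.
  by rewrite -exprD subnK //; lia.
by rewrite -mulrA -modp_mul Xk_xqk mulr1.
Qed.

Lemma rv_coef0 p : p != 0 -> (rv p)`_0 = lead_coef p.
Proof.
move=> p0; rewrite /rv coef_poly lt0n size_poly_eq0 p0 subn0.
by [].
Qed.

Lemma rv_neq0 p : p != 0 -> rv p != 0.
Proof.
move=> p0; apply: contra_neq (p0) => h.
by apply/eqP; rewrite -lead_coef_eq0 -rv_coef0 // h coef0.
Qed.

Lemma rv_full p : p`_0 != 0 -> size (rv p) = size p.
Proof. by move=> h; rewrite /rv size_poly_eq // subnn. Qed.

Lemma rv_lead p : p`_0 != 0 -> lead_coef (rv p) = p`_0.
Proof.
move=> h; have p0 : (0 < size p)%N.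
  by rewrite lt0n size_poly_eq0; apply: contra_neq h => ->; rewrite coef0.
rewrite /lead_coef rv_full // /rv coef_poly prednK // leqnn subnn.
by [].
Qed.

Lemma rv_small p : p != 0 -> p`_0 = 0 -> (size (rv p) < size p)%N.
Proof.
move=> p0 h; have ps : (0 < size p)%N by rewrite lt0n size_poly_eq0.
apply: (@leq_ltn_trans (size p).-1); last by rewrite prednK.
apply/leq_sizeP => j hj; rewrite /rv coef_poly.
case: ifP => // lt.
have -> : ((size p).-1 - j = 0)%N by lia.
by rewrite h.
Qed.

Lemma normalize (X : {set M}) (iL : 'I_l) u :
  (forall t c, c \in X -> scaleA t c \in X) -> u \in X ->
  (forall i : 'I_l, (i < iL)%N -> row i u = 0) -> toP (row iL u) != 0 ->
  exists2 v, v \in X &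
    [/\ Lind v = iL, Lcoef v \is monic & size (Lcoef v) = size (toP (row iL u))].
Proof.
move=> HX uX h0 h1; set q := toP (row iL u).
have lq : lead_coef q != 0 by rewrite lead_coef_eq0.
exists ((lead_coef q)^-1 *: u); first by rewrite -scaleA_C HX.
have LI : Lind ((lead_coef q)^-1 *: u) = iL.
  apply: Lind_char => [i' lt|]; first by rewrite rowZm h0 // scaler0.
  rewrite rowZm scaler_eq0 invr_eq0 (negbTE lq) /=.
  by apply: contra_neq h1 => ->; rewrite /Defs.toP linear0.
split => //; rewrite (Lcoef_row LI) rowZm toPZ -/q.
  by rewrite monicE lead_coefZ mulVf.
by rewrite size_scale // invr_eq0.
Qed.

Lemma Kstep u (iL : 'I_l) : (forall i : 'I_l, (i < iL)%N -> row i u = 0) ->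
  (forall i : 'I_l, (i < iL)%N ->
     row i (scaleA (ofP 'X^((size (toP (row iL u))).-1)) (star u)) = 0) /\
  toP (row iL (scaleA (ofP 'X^((size (toP (row iL u))).-1)) (star u))) =
    rv (toP (row iL u)).
Proof.
move=> h0; split.
  move=> i lt; rewrite row_scaleA row_star (h0 i lt) sig0 mA_0r.
  by [].
rewrite row_scaleA row_star mA_toP toP_sig toP_ofP modp_mulml modp_mul rev_mod //.
exact: toP_size.
Qed.

Lemma mA_ofP p q : mulA (ofP p) (ofP q) = ofP (p * q).
Proof. by rewrite /Defs.mulA !toP_ofP -ofP_mod modp_mulml modp_mul ofP_mod. Qed.


Definition recip (g : M) : M := \matrix_(j < l)
    let h := Lcoef g in
    ofP (((h`_0)^-1) *: ('X^((size h).-1) * (toP (row j g) \Po xq))).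

Lemma leading_transfer (X : {set M}) (g : M) :
  (forall t c, c \in X -> scaleA t c \in X) -> is_leading X g ->
  is_leading [set v | star v \in X] (recip g).
Proof.
move=> HX [gX gL gmon gmin].
set Y := [set v | star v \in X].
have HY : forall t c, c \in Y -> scaleA t c \in Y.
  by move=> t c; rewrite !inE star_scaleA; apply: HX.
have gl : (Lind g < l)%N.
  rewrite ltnNge; apply/negP => /Lcoef_l h; move: gmon.
  by rewrite h monicE lead_coef0 eq_sym oner_eq0.
set iL := Ordinal gl.
have gLi : Lind g = iL by [].
have h0 : forall i : 'I_l, (i < iL)%N -> row i g = 0.
  by move=> i lt; apply: Lind_zero.
have Lcg : Lcoef g = toP (row iL g) := Lcoef_row gLi.
set q := toP (row iL g) in Lcg.
have q0 : q != 0.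
  by apply: contraTneq gmon => hq; rewrite Lcg hq monicE lead_coef0 eq_sym oner_eq0.
have LX : LindS X = iL by rewrite -gL.
have LY : LindS Y = iL by rewrite /Y LindS_star.
have [w1z w1r] := Kstep h0.
set w1 := scaleA _ (star g) in w1z w1r.
rewrite -/q in w1r.
have w1Y : w1 \in Y by rewrite inE star_scaleA starK HX.
have sw1 : star w1 \in X by move: w1Y; rewrite inE.
have qc0 : q`_0 != 0.
  apply/eqP => hq.
  have r0 : rv q != 0 := rv_neq0 q0.
  have rs := rv_small q0 hq.
  have [w2z w2r] := Kstep w1z.
  rewrite w1r in w2z w2r.
  have w2X := HX (ofP 'X^((size (rv q)).-1)) _ sw1.
  have nz : toP (row iL (scaleA (ofP 'X^((size (rv q)).-1)) (star w1))) != 0.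
    by rewrite w2r; exact: rv_neq0.
  have [v vX [vL vmon vsize]] := normalize HX w2X w2z nz.
  have vL' : Lind v = LindS X by rewrite vL LX.
  have := gmin v vX vL' vmon.
  rewrite Lcg vsize w2r => /leq_trans /(_ (size_poly _ _)).
  by rewrite leqNgt rs.
have -> : recip g = (q`_0)^-1 *: w1.
  apply/row_matrixP => j; rewrite rowK rowZm /w1 row_scaleA row_star /=.
  by rewrite Lcg /sig mA_ofP ofPZ.
have qi0 : (q`_0)^-1 != 0 by rewrite invr_eq0.
have Gz : forall i : 'I_l, (i < iL)%N -> row i ((q`_0)^-1 *: w1) = 0.
  by move=> i lt; rewrite rowZm w1z // scaler0.
have Gr : toP (row iL ((q`_0)^-1 *: w1)) = (q`_0)^-1 *: rv q.
  by rewrite rowZm toPZ w1r.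
have GL : Lind ((q`_0)^-1 *: w1) = iL.
  apply: Lind_char => //; apply: contra_neq (rv_neq0 q0) => h.
  by apply/eqP; move: Gr; rewrite h /Defs.toP linear0 => /esym/eqP; rewrite scaler_eq0 (negbTE qi0).
have GLc : Lcoef ((q`_0)^-1 *: w1) = (q`_0)^-1 *: rv q by rewrite (Lcoef_row GL) Gr.
split.
- by rewrite inE starZ -scaleA_C HX.
- by rewrite GL LY.
- by rewrite GLc monicE lead_coefZ rv_lead // mulVf.
move=> c' c'Y c'L c'mon.
rewrite LY in c'L.
have h0' : forall i : 'I_l, (i < iL)%N -> row i c' = 0.
  by move=> i lt; apply: Lind_zero; rewrite c'L.
have Lc' : Lcoef c' = toP (row iL c') := Lcoef_row c'L.
have hc0 : toP (row iL c') != 0.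
  by apply: contraTneq c'mon => hq; rewrite Lc' hq monicE lead_coef0 eq_sym oner_eq0.
have [wz wr] := Kstep h0'.
have sc' : star c' \in X by move: c'Y; rewrite inE.
have wX := HX (ofP 'X^((size (toP (row iL c'))).-1)) _ sc'.
have nz : toP (row iL (scaleA (ofP 'X^((size (toP (row iL c'))).-1)) (star c'))) != 0.
  by rewrite wr; exact: rv_neq0.
have [v vX [vL vmon vsize]] := normalize HX wX wz nz.
have vL' : Lind v = LindS X by rewrite vL LX.
have := gmin v vX vL' vmon.
rewrite GLc size_scale // rv_full // Lcg vsize wr Lc' => /leq_trans; apply.
exact: size_poly.
Qed.


Lemma star0 : star 0 = 0.
Proof. by have := starZ 0 (0 : M); rewrite !scale0r. Qed.

Lemma star_neq0 c : (star c != 0) = (c != 0).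
Proof. by rewrite -{1}star0 (inj_eq star_inj). Qed.

End Alg.

Unset Implicit Arguments.

Theorem mainTheorem16 (F : finFieldType) (m l : nat) (eps : F)
  (Hm : (0 < m)%N) (Heps : eps = 1 \/ eps = -1)
  (C : {set 'M[F]_(l, m)}) (HC : is_Acode eps C)
  (k : nat) (G : 'I_k -> 'M[F]_(l, m))
  (HG : basis_of_divisors C G) :
  basis_of_divisors (dualF (dualA eps C)) (reciprocal_basis eps G).
Proof.
have Heps2 : eps * eps = 1.
  case: Heps => ->; first exact: mulr1.
  by rewrite mulrNN mulr1.
case: HG => HG1 HG2 HG3.
have HC' := HC; case: HC' => C0 CD CZ.
rewrite (dual_dual Hm Heps2 HC).
split.
- move=> n lt; rewrite (Csub_star Hm Heps2); case/existsP: (HG1 n lt) => c /andP [cC c0].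
  apply/existsP; exists (star eps c).
  by rewrite inE (starK Hm Heps2) cC /= (star_neq0 Hm Heps2).
- move=> n le; rewrite (Csub_star Hm Heps2); apply/negP => /existsP [c /andP [cC c0]].
  apply: (negP (HG2 n le)); apply/existsP; exists (star eps c).
  have cC' : star eps c \in Csub C n by move: cC; rewrite inE.
  by rewrite cC' (star_neq0 Hm Heps2).
- move=> j; rewrite (Csub_star Hm Heps2).
  exact: (leading_transfer Hm Heps2 (fun t c => @Csub_scale _ _ _ _ C CZ j t c) (HG3 j)).
Qed.
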